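(* Let $A\in S^n_+$, $b\in\mathbb{R}^n$, $c\in\mathbb{R}$, $r>0$. If $A$ is not nonexpansive, then $f(x)=\frac r2\langle x,Ax\rangle+\langle b,x\rangle+c$ is not the Moreau envelope $e_rg$ of any proper, lower semicontinuous, convex function $g$.
   Context: $S^n_+$ is the set of symmetric positive semidefinite $n\times n$ matrices; $A$ is nonexpansive if $\|Ax-Ay\|\le\|x-y\|$ for all $x,y$. $e_rg(x)=\inf_y\{g(y)+\frac r2\|y-x\|^2\}$. *)

(* Defs.v *)
From HB Require Import structures.
From mathcomp Require Import all_boot all_order all_algebra.
From mathcomp Require Import all_classical all_reals all_analysis.
Set Implicit Arguments. Unset Strict Implicit. Unset Printing Implicit Defensive.
Import Order.TTheory GRing.Theory Num.Theory.
Import numFieldNormedType.Exports.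
Local Open Scope ring_scope.
Local Open Scope classical_set_scope.

Definition inner {R : realType} {n : nat} (x y : 'cV[R]_n) : R := (x^T *m y) 0 0.
Definition enorm {R : realType} {n : nat} (x : 'cV[R]_n) : R := Num.sqrt (inner x x).

Definition psd {R : realType} {n : nat} (A : 'M[R]_n) : Prop :=
  A^T = A /\ forall x : 'cV[R]_n, 0 <= inner x (A *m x).

Definition nonexpansive_mx {R : realType} {n : nat} (A : 'M[R]_n) : Prop :=
  forall x y : 'cV[R]_n, enorm (A *m x - A *m y) <= enorm (x - y).

Definition proper_fun {R : realType} {n : nat} (g : 'cV[R]_n -> \bar R) : Prop :=
  (forall x, g x != -oo%E) /\ (exists x, g x != +oo%E).

Definition econvex {R : realType} {n : nat} (g : 'cV[R]_n -> \bar R) : Prop :=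
  forall (x y : 'cV[R]_n) (t : R), 0 < t < 1 ->
    (g (t *: x + (1 - t) *: y)%R <= t%:E * g x + (1 - t)%:E * g y)%E.

Definition moreau_env {R : realType} {n : nat} (r : R) (g : 'cV[R]_n -> \bar R)
  (x : 'cV[R]_n) : \bar R :=
  ereal_inf [set (g y + (r / 2 * enorm (y - x) ^+ 2)%:E)%E | y in [set: 'cV[R]_n]].

Definition quadf {R : realType} {n : nat} (r : R) (A : 'M[R]_n) (b : 'cV[R]_n) (c : R)
  (x : 'cV[R]_n) : R := r / 2 * inner x (A *m x) + inner b x + c.

Definition lsc {R : realType} {n : nat} (g : 'cV[R]_n -> \bar R) : Prop :=
  lower_semicontinuous g.

(* Main.v *)
Require Import Defs.
From HB Require Import structures.
From mathcomp Require Import all_boot all_order all_algebra.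
From mathcomp Require Import all_classical all_reals all_analysis.
From mathcomp Require Import lra.
Import Order.TTheory GRing.Theory Num.Theory.
Local Open Scope ring_scope.

Section S.
Variables (R : realType) (n : nat).
Implicit Types (x y z : 'cV[R]_n) (A : 'M[R]_n).

Lemma innerDl x y z : inner (x + y) z = inner x z + inner y z.
Proof. by rewrite /inner linearD /= mulmxDl mxE. Qed.
Lemma innerDr x y z : inner z (x + y) = inner z x + inner z y.
Proof. by rewrite /inner mulmxDr mxE. Qed.
Lemma innerNl x z : inner (- x) z = - inner x z.
Proof. by rewrite /inner linearN /= mulNmx mxE. Qed.
Lemma innerNr x z : inner z (- x) = - inner z x.
Proof. by rewrite /inner mulmxN mxE. Qed.
Lemma innerBl x y z : inner (x - y) z = inner x z - inner y z.
Proof. by rewrite innerDl innerNl. Qed.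
Lemma innerBr x y z : inner z (x - y) = inner z x - inner z y.
Proof. by rewrite innerDr innerNr. Qed.
Lemma innerC x y : inner x y = inner y x.
Proof.
rewrite /inner -[in LHS](trmxK (x^T *m y)) trmx_mul trmxK.
by rewrite [in LHS]mxE.
Qed.
Lemma innerA A x y : A^T = A -> inner x (A *m y) = inner (A *m x) y.
Proof. by move=> hA; rewrite /inner mulmxA trmx_mul hA. Qed.
Lemma inner_ge0 x : 0 <= inner x x.
Proof.
rewrite /inner mxE; apply: sumr_ge0 => i _; by rewrite mxE -expr2 sqr_ge0.
Qed.
Lemma enorm_sq x : enorm x ^+ 2 = inner x x.
Proof. by rewrite /enorm sqr_sqrtr // inner_ge0. Qed.

Lemma psd_nonexp A : psd A -> (forall v, inner v (A *m v) <= inner v v) ->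
  nonexpansive_mx A.
Proof.
move=> [hT hP] hI x y; rewrite /enorm -mulmxBr; move: (x - y : 'cV[R]_n) => v.
rewrite ler_sqrt ?inner_ge0 //.
move wdef: (A *m v) => w.
have := hP (v - w).
rewrite mulmxBr -/w !innerBl !innerBr.
have e1 : inner w (A *m v) = inner w w by rewrite wdef.
have e2 : inner v (A *m w) = inner w w by rewrite innerA // wdef.
rewrite e1 e2.
have := hI v; have := hI w.
set a := inner v (A *m v); set b := inner w (A *m w); set W := inner w w.
lra.
Qed.
Lemma inner0l x : inner 0 x = 0.
Proof. by rewrite /inner linear0 mul0mx mxE. Qed.
Lemma inner0r x : inner x 0 = 0.
Proof. by rewrite /inner mulmx0 mxE. Qed.
End S.

Theorem proposition4p44 (R : realType) (n : nat) (A : 'M[R]_n) (b : 'cV[R]_n)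
    (c r : R) :
  psd A -> 0 < r -> ~ nonexpansive_mx A ->
  ~ exists g : 'cV[R]_n -> \bar R,
      [/\ proper_fun g, lsc g, econvex g &
          forall x, (quadf r A b c x)%:E = moreau_env r g x].
Proof.
move=> hA r0 hne [g [[gNy _] _ _ hg]]; apply: hne; apply: psd_nonexp => // v.
set f := quadf r A b c.
have e0 : f 0 = c by rewrite /f /quadf mulmx0 !inner0l !inner0r mulr0 !add0r.
have key : forall y, (((f v + f (- v) - r * inner v v) / 2)%:E <=
    g y + (r / 2 * enorm (y - 0) ^+ 2)%:E)%E.
  move=> y.
  have h1 : ((f v)%:E <= g y + (r / 2 * enorm (y - v) ^+ 2)%:E)%E.
    by rewrite hg; apply: ereal_inf_lbound; exists y.
  have h2 : ((f (- v))%:E <= g y + (r / 2 * enorm (y - - v) ^+ 2)%:E)%E.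
    by rewrite hg; apply: ereal_inf_lbound; exists y.
  move: h1 h2 (gNy y); case: (g y) => [gy h1 h2 _| _ _ _ |] //=; last first.
    by rewrite addye ?leey.
  rewrite -EFinD lee_fin; rewrite -EFinD lee_fin in h1; rewrite -EFinD lee_fin in h2.
  move: h1 h2; rewrite !enorm_sq !innerBl !innerBr !innerNl !innerNr !inner0l !inner0r.
  rewrite [inner v y]innerC => h1 h2; lra.
have : (((f v + f (- v) - r * inner v v) / 2)%:E <= moreau_env r g 0)%E.
  by apply: le_ereal_inf_tmp => _ [y _ <-]; apply: key.
rewrite -hg -/f e0 lee_fin /f /quadf mulmxN !innerNl !innerNr opprK => h.
have : r * (inner v (A *m v) - inner v v) <= 0 by lra.
by rewrite pmulr_rle0 // subr_le0.
Qed.
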